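(* Let $(F, v, \Gamma)$ be a Henselian valued field such that $T = \mathrm{Th}(F; +, \cdot, |)$ is dp-small. Then the value group $\Gamma$ is divisible.
   Context: Here $v: F^\times\to\Gamma$ is the valuation and $a\mid b$ holds iff $v(a)\le v(b)$. For a complete theory $T$ in language $L$ with monster model $\mathcal{U}$ ($\mathcal{U}_y$ the $|y|$-tuples from $\mathcal{U}$): a partial type $\pi(x)$ is dp-small if there do not exist $L(\mathcal{U})$-formulas $\varphi_i(x)$ ($i<\omega$), an $L$-formula $\psi(x;y)$ and $b_j\in\mathcal{U}_y$ ($j<\omega$) such that for all $i_0,j_0<\omega$ the type $\pi(x)\cup\{\varphi_{i_0}(x),\psi(x;b_{j_0})\}\cup\{\neg\varphi_i(x): i\ne i_0\}\cup\{\neg\psi(x;b_j): j\neq j_0\}$ is consistent. $T$ is dp-small if $x=x$ is dp-small for $x$ a single variable. *)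

(* Defs.v *)
From HB Require Import structures.
From mathcomp Require Import all_boot all_order all_algebra.
Set Implicit Arguments. Unset Strict Implicit. Unset Printing Implicit Defensive.
Import Order.TTheory GRing.Theory Num.Theory.
Local Open Scope ring_scope.

(* Valued fields, given by their valuation ring O.                     *)
(* Value group Gamma = F^x / O^x, v(a) <= v(b) iff b \in a * O.       *)

Definition is_valuation_ring (F : fieldType) (O : {pred F}) : Prop :=
  [/\ 1 \in O,
      (forall x y, x \in O -> y \in O -> x - y \in O),
      (forall x y, x \in O -> y \in O -> x * y \in O) &
      (forall x : F, x != 0 -> x \in O \/ x^-1 \in O)].

Definition vunit (F : fieldType) (O : {pred F}) (x : F) : Prop :=
  [/\ x != 0, x \in O & x^-1 \in O].

Definition vmax (F : fieldType) (O : {pred F}) (x : F) : Prop :=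
  x \in O /\ ~ vunit O x.

(* the divisibility relation a | b  iff  v(a) <= v(b) (with v(0) = oo) *)
Definition vdiv (F : fieldType) (O : {pred F}) (a b : F) : Prop :=
  exists2 c, c \in O & b = a * c.

Definition henselian (F : fieldType) (O : {pred F}) : Prop :=
  forall p : {poly F}, p \is monic -> (forall i, p`_i \in O) ->
  forall a, a \in O -> vmax O p.[a] -> vunit O (p^`()).[a] ->
  exists b, [/\ b \in O, p.[b] = 0 & vmax O (b - a)].

Definition value_group_divisible (F : fieldType) (O : {pred F}) : Prop :=
  forall a : F, a != 0 -> forall n : nat, (0 < n)%N ->
  exists b : F, b != 0 /\ vunit O (a / b ^+ n).

(* Variables are de Bruijn indices; FEx binds index 0.                 *)

Inductive term : Type :=
| TVar of nat
| TAdd of term & term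
| TMul of term & term.

Inductive formula : Type :=
| FEq of term & term
| FDiv of term & term
| FNot of formula
| FAnd of formula & formula
| FEx of formula.

Record structure : Type := Structure {
  carrier :> Type;
  s_add : carrier -> carrier -> carrier;
  s_mul : carrier -> carrier -> carrier;
  s_div : carrier -> carrier -> Prop }.

Definition scons (M : Type) (x : M) (e : nat -> M) : nat -> M :=
  fun n => match n with O => x | S k => e k end.

Fixpoint eval_term (M : structure) (e : nat -> M) (t : term) : M :=
  match t with
  | TVar n => e n
  | TAdd t u => s_add (eval_term e t) (eval_term e u)
  | TMul t u => s_mul (eval_term e t) (eval_term e u)
  end.

Fixpoint sat (M : structure) (e : nat -> M) (f : formula) : Prop :=
  match f with
  | FEq t u => eval_term e t = eval_term e u
  | FDiv t u => s_div (eval_term e t) (eval_term e u)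
  | FNot g => ~ sat e g
  | FAnd g h => sat e g /\ sat e h
  | FEx g => exists x : M, sat (scons x e) g
  end.

(* M and N have the same complete theory: they agree on the universal
   closure of every formula (hence on every sentence). *)
Definition elem_equiv (M N : structure) : Prop :=
  forall f : formula, (forall e : nat -> M, sat e f) <-> (forall e : nat -> N, sat e f).

(* The monster model is replaced by an arbitrary model M of Th(S);
   "consistent" (with the elementary diagram of M) = finitely satisfiable in M.
   phi_i(x) is the L(M)-formula (phi i) with parameters c i;
   psi(x; b_j) is the L-formula psi with x := index 0, parameters b j. *)
Definition dp_small (S : structure) : Prop :=
  forall M : structure, elem_equiv M S ->
  ~ exists (phi : nat -> formula) (c : nat -> nat -> M)
           (psi : formula) (b : nat -> nat -> M),
      forall i0 j0 N : nat, exists x : M,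
        [/\ sat (scons x (c i0)) (phi i0),
            sat (scons x (b j0)) psi,
            (forall i, (i < N)%N -> i <> i0 -> ~ sat (scons x (c i)) (phi i)) &
            (forall j, (j < N)%N -> j <> j0 -> ~ sat (scons x (b j)) psi)].

Definition vf_structure (F : fieldType) (O : {pred F}) : structure :=
  @Structure F (fun x y => x + y) (fun x y => x * y) (vdiv O).

(* Main.v *)
Require Import Defs.
From mathcomp Require Import all_boot all_order all_algebra.
From mathcomp Require Import boolp classical_sets filter.
From mathcomp Require Import ring lra zify.
From Stdlib Require Import ProofIrrelevance Classical.
Set Implicit Arguments. Unset Strict Implicit. Unset Printing Implicit Defensive.
Import Order.TTheory GRing.Theory Num.Theory.

Record ultra := Ultra {
  uf :> (nat -> Prop) -> Prop;
  uI : forall A B : nat -> Prop, uf A -> uf B -> uf (fun k => A k /\ B k);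
  uS : forall A B : nat -> Prop, (forall k, A k -> B k) -> uf A -> uf B;
  u0 : ~ uf (fun _ => False);
  uC : forall A : nat -> Prop, uf A \/ uf (fun k => ~ A k);
  uE : forall m, uf (fun k => (m <= k)%N) }.
Arguments uI {u A B}. Arguments uS {u A B}. Arguments u0 {u}. Arguments uC {u}. Arguments uE {u}.

Lemma ultra_ex : exists u : ultra, True.
Proof.
have [G [UG sub]] := ultraFilterLemma (eventually_filter).
unshelve eexists; last by [].
apply: (@Ultra G).
- by move=> A B HA HB; exact: (filterI HA HB).
- by move=> A B AB HA; apply: (filterS _ HA) => k; apply: AB.
- by move=> H; apply: (@filter_not_empty _ G _); have -> : set0 = (fun _ : nat => False) by [].
- by move=> A; exact: (in_ultra_setVsetC A UG).
- by move=> m; apply: sub; exists m.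
Qed.

Lemma uT (u : ultra) (A : nat -> Prop) : (forall k, A k) -> u A.
Proof. by move=> H; apply: (uS _ (uE 0)) => k _; apply: H. Qed.

Lemma uNot (u : ultra) (A : nat -> Prop) : ~ u A <-> u (fun k => ~ A k).
Proof.
split; first by case: (@uC u A).
move=> HN HA; apply: (@u0 u); apply: (uS _ (uI HA HN)) => k [].
by move=> a na; apply: na.
Qed.


Definition ae (S : Type) (u : ultra) (f g : nat -> S) := u (fun k => f k = g k).

Lemma ae_refl (S : Type) (u : ultra) (f : nat -> S) : ae u f f.
Proof. by apply: uT. Qed.
Lemma ae_sym (S : Type) (u : ultra) (f g : nat -> S) : ae u f g -> ae u g f.
Proof. by apply: uS. Qed.
Lemma ae_trans (S : Type) (u : ultra) (f g h : nat -> S) : ae u f g -> ae u g h -> ae u f h.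
Proof. by move=> H1 H2; apply: (uS _ (uI H1 H2)) => k [-> ->]. Qed.

Definition UP (S : Type) (u : ultra) : Type :=
  {P : (nat -> S) -> Prop | exists f, P = ae u f}.

Definition cls (S : Type) (u : ultra) (f : nat -> S) : UP S u := exist _ (ae u f) (ex_intro _ f erefl).
Definition rep (S : Type) (u : ultra) (X : UP S u) : nat -> S := proj1_sig (cid (proj2_sig X)).

Lemma cls_eq (S : Type) (u : ultra) (f g : nat -> S) : cls u f = cls u g <-> ae u f g.
Proof.
split.
- move=> H; have: proj1_sig (cls u f) g by rewrite H /=; apply: ae_refl.
  by [].
- move=> H; rewrite /cls.
  have E : ae u f = ae u g.
    apply: funext => h; apply: propext; split => Hh.
    + exact: ae_trans (ae_sym H) Hh.
    + exact: ae_trans H Hh.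
  move: (ex_intro _ f erefl : exists f0, ae u f = ae u f0).
  rewrite E => pf; congr exist; apply: proof_irrelevance.
Qed.

Lemma cls_rep (S : Type) (u : ultra) (X : UP S u) : cls u (rep X) = X.
Proof.
case: X => P pf; rewrite /rep /=; case: (cid pf) => f Hf /=.
subst P; rewrite /cls; congr exist; apply: proof_irrelevance.
Qed.

Lemma rep_cls (S : Type) (u : ultra) (f : nat -> S) : ae u (rep (cls u f)) f.
Proof. by apply/cls_eq; rewrite cls_rep. Qed.

Definition UPs (S : structure) (u : ultra) : structure :=
  @Structure (UP S u)
    (fun X Y => cls u (fun k => s_add (rep X k) (rep Y k)))
    (fun X Y => cls u (fun k => s_mul (rep X k) (rep Y k)))
    (fun X Y => u (fun k => s_div (rep X k) (rep Y k))).

Lemma eval_ext (M : structure) (e e' : nat -> M) t :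
  (forall n, e n = e' n) -> eval_term e t = eval_term e' t.
Proof. by move=> H; elim: t => [n|t IH s IH'|t IH s IH'] //=; rewrite IH IH'. Qed.

Lemma sat_ext (M : structure) f : forall (e e' : nat -> M),
  (forall n, e n = e' n) -> (sat e f <-> sat e' f).
Proof.
elim: f => [t s|t s|g IH|g IH h IH'|g IH] e e' H /=.
- by rewrite (eval_ext t H) (eval_ext s H).
- by rewrite (eval_ext t H) (eval_ext s H).
- by rewrite (IH e e' H).
- by rewrite (IH e e' H) (IH' e e' H).
- have He : forall x : M, forall n, scons x e n = scons x e' n by move=> x; case.
  by split=> -[x Hx]; exists x; move: Hx; rewrite (IH _ _ (He x)).
Qed.

Lemma los_term (S : structure) (u : ultra) (E : nat -> nat -> S) t :
  @eval_term (UPs S u) (fun n => cls u (E n)) t =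
  cls u (fun k => eval_term (fun n => E n k) t).
Proof.
elim: t => [n|t IH s IH'|t IH s IH'] //=; rewrite IH IH'; apply/cls_eq;
  apply: (uS _ (uI (rep_cls u (fun k => eval_term (fun n => E n k) t))
                   (rep_cls u (fun k => eval_term (fun n => E n k) s))));
  by move=> k [-> ->].
Qed.

Lemma los (S : structure) (u : ultra) f : forall (E : nat -> nat -> S),
  @sat (UPs S u) (fun n => cls u (E n)) f <-> u (fun k => sat (fun n => E n k) f).
Proof.
elim: f => [t s|t s|g IH|g IH h IH'|g IH] E /=.
- by rewrite !los_term cls_eq.
- rewrite !los_term; set f1 := (fun k => _ t); set f2 := (fun k => _ s).
  have H := uI (rep_cls u f1) (rep_cls u f2).
  split=> Hd; apply: (uS _ (uI H Hd)) => k [[-> ->]] //.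
- have := IH E; have := @uNot u (fun k => sat (fun n => E n k) g); simpl; tauto.
- have := IH E; have := IH' E; move=> H1 H2; split.
  + by case=> /H2 a /H1 b; apply: uI.
  + by move=> H; split; [apply/H2|apply/H1]; apply: (uS _ H) => k [].
- split.
  + case=> X HX.
    have HX' : @sat (UPs S u) (fun n => cls u (scons (rep X) E n)) g.
      have Hp : forall n, scons X (fun n => cls u (E n)) n = cls u (scons (rep X) E n).
        by case=> //=; rewrite cls_rep.
      by rewrite -(@sat_ext (UPs S u) g _ _ Hp).
    move/IH: HX'; apply: uS => k Hk; exists (rep X k).
    have Hp : forall n, scons (rep X) E n k = scons (rep X k) (fun n => E n k) n by case.
    by rewrite -(sat_ext g Hp).
  + move=> H.
    have [k0 Hk0] : exists k, exists x : S, sat (scons x (fun n => E n k)) g.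
      apply: NNPP => nH; apply: (@u0 u); apply: (uS _ H) => k Hk; apply: nH; by exists k.
    pose x0 : S := proj1_sig (cid Hk0).
    pose xs k := match pselect (exists x, sat (scons x (fun n => E n k)) g) with
                 | left h => proj1_sig (cid h) | right _ => x0 end.
    exists (cls u xs).
    have Hp : forall n, scons (cls u xs) (fun n => cls u (E n)) n = cls u (scons xs E n) by case.
    rewrite (@sat_ext (UPs S u) g _ _ Hp) IH; apply: (uS _ H) => k Hk.
    have Hp2 : forall n, scons xs E n k = scons (xs k) (fun n => E n k) n by case.
    rewrite (sat_ext g Hp2) /xs; case: pselect => [h|//].
    exact: (proj2_sig (cid h)).
Qed.

Lemma ultra_elem (S : structure) (u : ultra) : elem_equiv (UPs S u) S.
Proof.
move=> f; split.
- move=> H e; have := H (fun n => cls u (fun _ => e n)).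
  move/(@los S u f (fun n _ => e n)) => Hu.
  apply: NNPP => nH; apply: (@u0 u); by apply: (uS _ Hu).
- move=> H e.
  have Hp : forall n, e n = cls u (rep (e n)) by move=> n; rewrite cls_rep.
  rewrite (@sat_ext (UPs S u) f _ _ Hp) los; apply: uT => k; exact: H.
Qed.

Local Open Scope ring_scope.


Lemma O1 (F : fieldType) (O : {pred F}) : is_valuation_ring O -> 1 \in O.
Proof. by case. Qed.
Lemma OM (F : fieldType) (O : {pred F}) : is_valuation_ring O ->
  forall x y, x \in O -> y \in O -> x * y \in O.
Proof. by case. Qed.
Lemma OX (F : fieldType) (O : {pred F}) : is_valuation_ring O ->
  forall x n, x \in O -> x ^+ n \in O.
Proof.
move=> hO x n xO; elim: n => [|n IH]; first by rewrite expr0 (O1 hO).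
by rewrite exprS (OM hO).
Qed.

Lemma vunit_root (F : fieldType) (O : {pred F}) : is_valuation_ring O ->
  forall (w : F) m, vunit O (w ^+ m.+1) -> vunit O w.
Proof.
move=> hO w m [nz uO uiO].
have wnz : w != 0 by move: nz; apply: contra => /eqP ->; rewrite expr0n.
have [_ _ _ htot] := hO.
have winv : w = (w^-1) ^+ m * (w ^+ m.+1).
  by rewrite exprS mulrCA -exprMn mulVf // expr1n mulr1.
case: (htot w wnz) => h; split => //.
- have -> : w^-1 = w ^+ m * (w ^+ m.+1)^-1.
    by rewrite exprS invfM mulrA mulrC mulrA mulVf ?expf_neq0 // mul1r.
  by apply: (OM hO) => //; apply: (OX hO).
- rewrite winv; by apply: (OM hO) => //; apply: (OX hO).
Qed.

Definition mp (F : fieldType) (O : {pred F}) (N : nat) (x : F) :=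
  exists y, vdiv O x (y ^+ N) /\ vdiv O (y ^+ N) x.

Lemma vdiv_refl (F : fieldType) (O : {pred F}) : is_valuation_ring O ->
  forall x : F, vdiv O x x.
Proof. by move=> hO x; exists 1; rewrite ?mulr1 // (O1 hO). Qed.

Lemma mp_mul (F : fieldType) (O : {pred F}) : is_valuation_ring O ->
  forall N K (x : F), (0 < K)%N -> mp O (N * K) x -> mp O N x.
Proof.
move=> hO N K x K0 [y [h1 h2]]; exists (y ^+ K); rewrite -exprM mulnC; by split.
Qed.

Lemma mp_pow (F : fieldType) (O : {pred F}) : is_valuation_ring O ->
  forall N t (a : F), mp O N (a ^+ (N * t)).
Proof.
move=> hO N t a; exists (a ^+ t); rewrite -exprM mulnC; split; exact: vdiv_refl.
Qed.


Lemma G1 (F : fieldType) (O : {pred F}) : is_valuation_ring O ->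
  forall (a : F), a \in O -> forall m m', (m <= m')%N -> vdiv O (a ^+ m) (a ^+ m').
Proof.
move=> hO a aO m m' le; exists (a ^+ (m' - m)); first exact: (OX hO).
by rewrite -exprD subnKC.
Qed.

Lemma G2 (F : fieldType) (O : {pred F}) : is_valuation_ring O ->
  forall (a : F), a \in O -> a != 0 -> a^-1 \notin O ->
  forall m m', (m' < m)%N -> ~ vdiv O (a ^+ m) (a ^+ m').
Proof.
move=> hO a aO anz ainv m m' lt [c cO E].
have : a ^+ m' * 1 = a ^+ m' * (a ^+ (m - m') * c).
  by rewrite mulr1 mulrA -exprD subnKC // ltnW.
move/(mulfI (expf_neq0 m' anz)).
case Hd: (m - m')%N => [|d]; first by move: Hd => /eqP; rewrite subn_eq0 leqNgt lt.
move=> E1; move/negP: ainv; apply.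
have -> : a^-1 = a ^+ d * c.
  by rewrite -[a^-1]mulr1 E1 exprS -mulrA mulKf.
by apply: (OM hO); [apply: (OX hO)|].
Qed.

Lemma F2 (F : fieldType) (O : {pred F}) : is_valuation_ring O ->
  forall (a : F) q, a != 0 -> (0 < q)%N ->
  (forall b, b != 0 -> ~ vunit O (a / b ^+ q)) ->
  forall i M, ~ mp O (q ^ i.+1) (a ^+ (q ^ i * (q * M + 1))).
Proof.
move=> hO a q anz q0 nor i M [y [[c1 c1O h1] [c2 c2O h2]]].
set x := a ^+ _ in h1 h2.
have xnz : x != 0 by rewrite expf_neq0.
have qi0 : (0 < q ^ i)%N by rewrite expn_gt0 q0.
have ynz : y != 0.
  apply/negP => /eqP y0; move: h2; rewrite y0 expr0n eqn0Ngt expn_gt0 q0 /= mul0r => x0.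
  by move: xnz; rewrite x0 eqxx.
have yNnz : y ^+ (q ^ i.+1) != 0 by rewrite expf_neq0.
have hu : vunit O (x / y ^+ (q ^ i.+1)).
  split.
  - by rewrite mulf_neq0 // invr_eq0.
  - by rewrite h2 mulrC mulKf.
  - by rewrite invf_div h1 mulrC mulKf.
pose w := a ^+ (q * M + 1) / y ^+ q.
have hw : x / y ^+ (q ^ i.+1) = w ^+ (q ^ i).-1.+1.
  rewrite prednK // /w expr_div_n -!exprM /x expnS.
  by rewrite [(_ * (q * M + 1))%N]mulnC.
rewrite hw in hu; move/(vunit_root hO): hu => hu.
apply: (nor (y / a ^+ M)); first by rewrite mulf_neq0 // invr_eq0 expf_neq0.
suff -> : a / (y / a ^+ M) ^+ q = w by [].
rewrite /w expr_div_n exprD expr1 [(q * M)%N]mulnC exprM.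
have aq : (a ^+ M) ^+ q != 0 by rewrite !expf_neq0.
have yq : y ^+ q != 0 by rewrite expf_neq0.
move: aq yq; set A := _ ^+ q; set Y := y ^+ q => aq yq.
by field; rewrite aq yq.
Qed.

Fixpoint pw (t : term) (m : nat) : term :=
  match m with 0%N => t | S m' => TMul t (pw t m') end.

Lemma eval_pw (F : fieldType) (O : {pred F}) (e : nat -> F) t m :
  @eval_term (vf_structure O) e (pw t m) = (@eval_term (vf_structure O) e t) ^+ m.+1.
Proof. elim: m => [|m IH]; first by rewrite /= expr1. rewrite [LHS]/=; rewrite IH [in RHS]exprS. by []. Qed.

Definition PowIn (m : nat) : formula :=
  FEx (FAnd (FDiv (TVar 1) (pw (TVar 0) m)) (FDiv (pw (TVar 0) m) (TVar 1))).

Lemma sat_PowIn (F : fieldType) (O : {pred F}) (x : F) e m :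
  @sat (vf_structure O) (scons x e) (PowIn m) <-> mp O m.+1 x.
Proof. rewrite /= /mp; split=> -[y Hy]; exists y; move: Hy; by rewrite !eval_pw. Qed.

Definition phi (q : nat) (i : nat) : formula :=
  FAnd (PowIn (q ^ i).-1) (FNot (PowIn (q ^ i.+1).-1)).

Definition psi : formula := FAnd (FDiv (TVar 1) (TVar 0)) (FNot (FDiv (TVar 2) (TVar 0))).

Lemma nat1 (q j0 i0 K : nat) :
  (j0 * q ^ (i0 + K.+1) + q ^ i0 = q ^ i0 * (q * (j0 * q ^ K) + 1))%N.
Proof. rewrite expnD expnS. ring. Qed.

Definition Bs (F : fieldType) (a : F) (q j k : nat) : nat -> F :=
  fun m => if m is 0%N then a ^+ (j * q ^ k) else a ^+ (j.+1 * q ^ k).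


Lemma condA (F : fieldType) (O : {pred F}) (hO : is_valuation_ring O) (a : F) (q : nat)
  (anz : a != 0) (q1 : (1 < q)%N) (nor : forall b, b != 0 -> ~ vunit O (a / b ^+ q))
  i0 j0 K (e : nat -> F) :
  @sat (vf_structure O) (scons (a ^+ (j0 * q ^ (i0 + K.+1) + q ^ i0)) e) (phi q i0).
Proof.
have qp : forall i, (0 < q ^ i)%N by move=> i; rewrite expn_gt0 (ltnW q1).
split.
- apply/sat_PowIn; rewrite prednK // nat1; exact: mp_pow.
- move/sat_PowIn; rewrite prednK // nat1; apply: (F2 hO anz (ltnW q1) nor).
Qed.

Lemma condB (F : fieldType) (O : {pred F}) (hO : is_valuation_ring O) (a : F) (q : nat)
  (anz : a != 0) (q1 : (1 < q)%N) (nor : forall b, b != 0 -> ~ vunit O (a / b ^+ q))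
  i0 j0 K (e : nat -> F) i : i <> i0 ->
  ~ @sat (vf_structure O) (scons (a ^+ (j0 * q ^ (i0 + K.+1) + q ^ i0)) e) (phi q i).
Proof.
have qp : forall i, (0 < q ^ i)%N by move=> i'; rewrite expn_gt0 (ltnW q1).
move=> ne; case: (ltngtP i i0) => lt; last by move: ne; rewrite lt.
- move=> [_ H]; apply: H; apply/sat_PowIn; rewrite prednK // nat1.
  rewrite -(subnKC lt) expnD -mulnA; exact: mp_pow.
- move=> [H _]; move/sat_PowIn: H; rewrite prednK // nat1.
  rewrite -(subnKC lt) expnD => H.
  apply: (F2 hO anz (ltnW q1) nor); apply: (mp_mul hO _ H); exact: qp.
Qed.

Lemma condC (F : fieldType) (O : {pred F}) (hO : is_valuation_ring O) (a : F) (q : nat)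
  (aO : a \in O) (anz : a != 0) (ainv : a^-1 \notin O) (q1 : (1 < q)%N)
  i0 j0 K j :
  @sat (vf_structure O) (scons (a ^+ (j0 * q ^ (i0 + K.+1) + q ^ i0)) (Bs a q j (i0 + K.+1))) psi
  <-> j = j0.
Proof.
have P0 : (0 < q ^ i0)%N by rewrite expn_gt0 (ltnW q1).
have PQ : (q ^ i0 < q ^ (i0 + K.+1))%N by rewrite ltn_exp2l // addnS ltnS leq_addr.
move: P0 PQ; set P := (q ^ i0)%N; set Q := (q ^ (i0 + K.+1))%N => P0 PQ.
rewrite /psi /=; split.
- move=> [h1 h2]; case: (ltngtP j j0) => lt //.
  + exfalso; apply: h2; apply: (G1 hO aO); nia.
  + exfalso; move: h1; apply: (G2 hO aO anz ainv); nia.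
- move=> ->; split.
  + apply: (G1 hO aO); nia.
  + apply: (G2 hO aO anz ainv); nia.
Qed.

Lemma los_scons (S : structure) (u : ultra) (xs : nat -> S) (E : nat -> nat -> S) f :
  @sat (UPs S u) (scons (cls u xs) (fun n => cls u (E n))) f <->
  u (fun k => sat (scons (xs k) (fun n => E n k)) f).
Proof.
have Hp : forall n, scons (cls u xs) (fun n => cls u (E n)) n = cls u (scons xs E n) by case.
rewrite (@sat_ext (UPs S u) f _ _ Hp) los; split; apply: uS => k;
  have Hp2 : forall n, scons xs E n k = scons (xs k) (fun n => E n k) n by case.
- by rewrite (sat_ext f Hp2).
- by rewrite (sat_ext f Hp2).
Qed.

Lemma vunitV (F : fieldType) (O : {pred F}) (x : F) : vunit O x -> vunit O x^-1.
Proof. by case=> nz h1 h2; split; rewrite ?invr_eq0 ?invrK. Qed.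

Theorem theorem1p6 (F : fieldType) (O : {pred F}) :
  is_valuation_ring O -> henselian O -> dp_small (vf_structure O) ->
  value_group_divisible O.
Proof.
move=> hO _ dps; apply: NNPP => nd.
have [a0 [a0nz [n [n0 nor0]]]] : exists a : F, a != 0 /\ exists n, (0 < n)%N /\
    forall b, b != 0 -> ~ vunit O (a / b ^+ n).
  apply: NNPP => H; apply: nd => a anz n n0; apply: NNPP => H2; apply: H.
  exists a; split => //; exists n; split => // b bnz hb; apply: H2; by exists b.
have [_ hsub _ htot] := hO.
have q1 : (1 < n)%N.
  case: n n0 nor0 => [//|[|//]] _ nor0.
  exfalso; apply: (nor0 a0 a0nz); rewrite expr1 divff //; split;
    rewrite ?oner_neq0 ?invr1 //; exact: (O1 hO).
have [a [aO [anz [ainv nor]]]] : exists a : F, [/\ a \in O, a != 0, a^-1 \notin O &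
    forall b, b != 0 -> ~ vunit O (a / b ^+ n)].
  case: (htot a0 a0nz) => h.
  - exists a0; split => //; apply/negP => hi; apply: (nor0 1 (oner_neq0 _)).
    by rewrite expr1n divr1; split.
  - exists a0^-1; split => //; rewrite ?invr_eq0 ?invrK //.
    + apply/negP => hi; apply: (nor0 1 (oner_neq0 _)).
      by rewrite expr1n divr1; split; rewrite // -[a0]invrK.
    + move=> b bnz hb; apply: (nor0 b^-1); first by rewrite invr_eq0.
      move/vunitV: hb; rewrite invf_div invrK exprVn invrK mulrC; by [].
have [u _] := ultra_ex.
have kE : forall k i0 : nat, (i0 < k)%N -> k = (i0 + (k - i0.+1).+1)%N.
  by move=> k i0 lt; rewrite addnS -addSn subnKC.
apply: (dps (UPs (vf_structure O) u) (ultra_elem (vf_structure O) u)).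
exists (phi n), (fun _ _ => cls u (fun _ => (0 : F))), psi,
  (fun j m => cls u (fun k => Bs a n j k m)).
move=> i0 j0 N.
exists (cls u (fun k => a ^+ (j0 * n ^ k + n ^ i0))); split.
- apply/(@los_scons (vf_structure O) u _ (fun _ _ => 0)).
  apply: (uS _ (uE i0.+1)) => k lt; rewrite (kE _ _ lt).
  exact: (condA hO anz q1 nor).
- apply/(@los_scons (vf_structure O) u _ (fun m k => Bs a n j0 k m)).
  apply: (uS _ (uE i0.+1)) => k lt; rewrite (kE _ _ lt).
  exact/(condC hO aO anz ainv q1).
- move=> i _ ne.
  rewrite (@los_scons (vf_structure O) u _ (fun _ _ => 0)); apply/uNot.
  apply: (uS _ (uE i0.+1)) => k lt; rewrite (kE _ _ lt).
  exact: (condB hO anz q1 nor).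
- move=> j _ ne.
  rewrite (@los_scons (vf_structure O) u _ (fun m k => Bs a n j k m)); apply/uNot.
  apply: (uS _ (uE i0.+1)) => k lt; rewrite (kE _ _ lt).
  by move/(condC hO aO anz ainv q1).
Qed.
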